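(* Let $V=\mathbb{C}^6$ and let $\pi\subset\mathbb{P}(\wedge^2V)$ be a projective plane all of whose points have rank exactly four. If every line contained in $\pi$ is special, then there is a hyperplane $H\subset V$ such that $\pi\subset\mathbb{P}(\wedge^2H)$ (i.e. $\pi$ is contained in the linear span of a sub-Grassmannian $\mathbb{G}(1,4)\subset\mathbb{G}(1,5)$).
   Context: Elements of $\wedge^2\mathbb{C}^6$ are identified with skew-symmetric $6\times6$ matrices; rank means matrix rank. Fix a basis $e_0,\dots,e_5$ of $V$. A projective line in $\mathbb{P}(\wedge^2V)$ all of whose points have rank four is called special if it is $PGL_6$-equivalent to the line spanned by $e_0\wedge e_2+e_1\wedge e_3$ and $e_0\wedge e_4+e_1\wedge e_2$. Work over $\mathbb{C}$. *)

(* Defs.v *)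
From HB Require Import structures.
From mathcomp Require Import all_boot all_order all_algebra.
From mathcomp Require Import Rstruct.
From mathcomp Require Import complex.
Set Implicit Arguments. Unset Strict Implicit. Unset Printing Implicit Defensive.
Import Order.TTheory GRing.Theory Num.Theory.
Local Open Scope ring_scope.

Notation CC := (complex Rdefinitions.R).

(* Elements of wedge^2 C^6 as skew_sym6-symmetric 6x6 matrices, stored as row
   vectors of length 36 via mxvec. A linear subspace of wedge^2 V is the row
   space of a matrix 'M_(k, 36). *)
Definition skew_sym6 (A : 'M[CC]_6) : Prop := A^T = - A.

(* u /\ w as a skew_sym6 matrix (e_i /\ e_j <-> E_ij - E_ji). *)
Definition wedge (u w : 'rV[CC]_6) : 'M[CC]_6 := u^T *m w - w^T *m u.

Definition e (i : 'I_6) : 'rV[CC]_6 := delta_mx 0 i.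
Definition special_line : 'M[CC]_(2, 6 * 6) :=
  col_mx (mxvec (wedge (e (inord 0)) (e (inord 2)) + wedge (e (inord 1)) (e (inord 3))))
         (mxvec (wedge (e (inord 0)) (e (inord 4)) + wedge (e (inord 1)) (e (inord 2)))).

Definition act (g : 'M[CC]_6) (v : 'rV[CC]_(6 * 6)) : 'rV[CC]_(6 * 6) :=
  mxvec (g^T *m vec_mx v *m g).
Definition act_rows (k : nat) (g : 'M[CC]_6) (W : 'M[CC]_(k, 6 * 6)) :
  'M[CC]_(k, 6 * 6) := \matrix_(i < k) act g (row i W).

Definition special_line_of (W : 'M[CC]_(2, 6 * 6)) : Prop :=
  \rank W = 2%N /\
  (forall v : 'rV[CC]_(6 * 6), (v <= W)%MS -> v != 0 -> \rank (vec_mx v) = 4%N) /\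
  exists g : 'M[CC]_6, g \in unitmx /\ (act_rows g W == special_line)%MS.

(* wedge^2 H for H the row space of h : 'M_(k,6): the span of the wedges
   h_i /\ h_j of its rows. *)
Definition wedge2 (k : nat) (h : 'M[CC]_(k, 6)) : 'M[CC]_(6 * 6) :=
  (\sum_(i < k) \sum_(j < k) <<mxvec (wedge (row i h) (row j h))>>)%MS.

(* Main.v *)
Require Import Defs.
From HB Require Import structures.
From mathcomp Require Import all_boot all_order all_algebra.
From mathcomp Require Import Rstruct complex.
From mathcomp Require Import zify.
Set Implicit Arguments. Unset Strict Implicit. Unset Printing Implicit Defensive.
Import GRing.Theory Num.Theory.
Local Open Scope ring_scope.

Section G.
Variable F : fieldType.
Definition gwedge (u w : 'rV[F]_6) : 'M[F]_6 := u^T *m w - w^T *m u.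
Definition ge (i : 'I_6) : 'rV[F]_6 := delta_mx 0 i.
Definition gspecial : 'M[F]_(2, 6 * 6) :=
  col_mx (mxvec (gwedge (ge (inord 0)) (ge (inord 2)) + gwedge (ge (inord 1)) (ge (inord 3))))
         (mxvec (gwedge (ge (inord 0)) (ge (inord 4)) + gwedge (ge (inord 1)) (ge (inord 2)))).
Definition gact (g : 'M[F]_6) (v : 'rV[F]_(6 * 6)) : 'rV[F]_(6 * 6) :=
  mxvec (g^T *m vec_mx v *m g).
Definition gact_rows (k : nat) (g : 'M[F]_6) (W : 'M[F]_(k, 6 * 6)) :
  'M[F]_(k, 6 * 6) := \matrix_(i < k) gact g (row i W).
Definition gspecial_line_of (W : 'M[F]_(2, 6 * 6)) : Prop :=
  \rank W = 2%N /\
  (forall v : 'rV[F]_(6 * 6), (v <= W)%MS -> v != 0 -> \rank (vec_mx v) = 4%N) /\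
  exists g : 'M[F]_6, g \in unitmx /\ (gact_rows g W == gspecial)%MS.
Definition gwedge2 (k : nat) (h : 'M[F]_(k, 6)) : 'M[F]_(6 * 6) :=
  (\sum_(i < k) \sum_(j < k) <<mxvec (gwedge (row i h) (row j h))>>)%MS.


Implicit Types (y : 'rV[F]_6).

Lemma kill_sub y k (W : 'M[F]_(k, 6 * 6)) v :
  (forall i, y *m vec_mx (row i W) = 0) -> (v <= W)%MS -> y *m vec_mx v = 0.
Proof.
move=> H /submxP[z ->]; rewrite (mulmx_sum_row z) linear_sum mulmx_sumr.
by apply: big1 => i _; rewrite linearZ -scalemxAr H scaler0.
Qed.

Lemma kill_row1 y (a : 'rV[F]_(6 * 6)) v :
  y *m vec_mx a = 0 -> (v <= a)%MS -> y *m vec_mx v = 0.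
Proof. by move=> H; apply: kill_sub => i; rewrite (ord1 i) row_id. Qed.

Lemma kill_col y (a b : 'rV[F]_(6 * 6)) v :
  y *m vec_mx a = 0 -> y *m vec_mx b = 0 -> (v <= col_mx a b)%MS -> y *m vec_mx v = 0.
Proof.
move=> Ha Hb; rewrite -addsmxE => /sub_addsmxP[[u1 u2] /= ->].
rewrite linearD mulmxDr (kill_row1 Ha (submxMl _ _)) (kill_row1 Hb (submxMl _ _)).
by rewrite addr0.
Qed.

Lemma ee (i j : 'I_6) : ge i *m (ge j)^T = (i == j)%:R%:M.
Proof.
rewrite /ge trmx_delta mul_delta_mx_cond; case: (i == j) => /=.
  by apply/matrixP => a b; rewrite !ord1 !mxE.
by rewrite mulr0n raddf0.
Qed.

Lemma inord_eq (i j : nat) : (i < 6)%N -> (j < 6)%N -> ((inord i : 'I_6) == inord j) = (i == j).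
Proof. by move=> Hi Hj; rewrite -val_eqE /= !inordK. Qed.

Lemma ge_neq0 i : ge i != 0.
Proof. by apply/eqP => /matrixP/(_ 0 i); rewrite !mxE !eqxx /= => /eqP; rewrite oner_eq0. Qed.

Definition sa : 'rV[F]_(6*6) := mxvec (gwedge (ge (inord 0)) (ge (inord 2)) + gwedge (ge (inord 1)) (ge (inord 3))).
Definition sb : 'rV[F]_(6*6) := mxvec (gwedge (ge (inord 0)) (ge (inord 4)) + gwedge (ge (inord 1)) (ge (inord 2))).

Ltac simpf := rewrite /sa /sb ?mxvecK /gwedge !mulmxDr ?mulmxBr ?mulmxN !mulmxA ?mulmxBl ?mulmxDl ?mulNmx !ee !inord_eq //= ?mul_scalar_mx ?scale0r ?scale1r; rewrite ?(subr0, sub0r, opprK, oppr0, addr0, add0r).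

Lemma e5_sa : ge (inord 5) *m vec_mx sa = 0.
Proof. by simpf. Qed.
Lemma e5_sb : ge (inord 5) *m vec_mx sb = 0.
Proof. by simpf. Qed.
Lemma sa_k : ge (inord 4) *m vec_mx sa = 0.
Proof. by simpf. Qed.
Lemma sb_k : ge (inord 3) *m vec_mx sb = 0.
Proof. by simpf. Qed.
Lemma sab_k : (ge (inord 2) - ge (inord 3) - ge (inord 4)) *m vec_mx (sa + sb) = 0.
Proof. rewrite /sa /sb -linearD; simpf. by rewrite addrACA addNr subrr addr0. Qed.
Lemma sa_nk : ge (inord 2) *m vec_mx sa != 0.
Proof. by simpf; rewrite oppr_eq0 ge_neq0. Qed.
Lemma sb_nk : ge (inord 4) *m vec_mx sb != 0.
Proof. by simpf; rewrite oppr_eq0 ge_neq0. Qed.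

Lemma e5_kills s : (s <= gspecial)%MS -> ge (inord 5) *m vec_mx s = 0.
Proof. exact: (kill_col e5_sa e5_sb). Qed.


Lemma rank2 n (x z : 'rV[F]_n) : x != 0 -> ~~ (z <= x)%MS -> \rank (col_mx x z) = 2%N.
Proof.
move=> nx nz; have sx : (x <= col_mx x z)%MS by rewrite -addsmxE addsmxSl.
have [le eq] := mxrank_leqif_sup sx.
rewrite rank_rV nx /= in le eq.
apply/eqP; rewrite eqn_leq rank_leq_row /= ltn_neqAle le andbT eq.
by rewrite col_mx_sub negb_and nz orbT.
Qed.

Lemma col_le_l m n (a : 'M[F]_(m, 6*6)) (b : 'M[F]_(n, 6*6)) : (a <= col_mx a b)%MS.
Proof. by rewrite -addsmxE addsmxSl. Qed.
Lemma col_le_r m n (a : 'M[F]_(m, 6*6)) (b : 'M[F]_(n, 6*6)) : (b <= col_mx a b)%MS.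
Proof. by rewrite -addsmxE addsmxSr. Qed.

Lemma act_lin g k (z : 'rV[F]_k) (W : 'M[F]_(k, 6*6)) : gact g (z *m W) = z *m gact_rows g W.
Proof.
rewrite (mulmx_sum_row z W) (mulmx_sum_row z (gact_rows g W)) /gact.
rewrite linear_sum mulmx_sumr mulmx_suml linear_sum; apply: eq_bigr => i _.
by rewrite rowK /gact linearZ -scalemxAr -scalemxAl linearZ.
Qed.

Lemma act0 g : gact g 0 = 0.
Proof. by rewrite /gact linear0 mulmx0 mul0mx linear0. Qed.

Lemma pull g y w : g \in unitmx -> y *m vec_mx (gact g w) = 0 -> (y *m g^T) *m vec_mx w = 0.
Proof.
move=> gU; rewrite /gact mxvecK !mulmxA => H.
by rewrite -(mulmxK gU (y *m g^T *m vec_mx w)) H mul0mx.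
Qed.

Lemma S1 (W : 'M[F]_(2, 6*6)) g : g \in unitmx -> (gact_rows g W == gspecial)%MS ->
  forall w, (w <= W)%MS -> (ge (inord 5) *m g^T) *m vec_mx w = 0.
Proof.
move=> gU /andP[H1 _] w /submxP[z ->]; apply: pull gU _; rewrite act_lin.
apply: e5_kills; exact: submx_trans (submxMl z _) H1.
Qed.

Lemma pre (W : 'M[F]_(2, 6*6)) g y s : g \in unitmx -> (gact_rows g W == gspecial)%MS ->
  (s <= gspecial)%MS -> s != 0 -> y *m vec_mx s = 0 ->
  exists w, [/\ (w <= W)%MS, w != 0 & (y *m g^T) *m vec_mx w = 0].
Proof.
move=> gU /andP[_ H2] sS ns ys.
have /submxP[z sz] := submx_trans sS H2.
exists (z *m W); split; first exact: submxMl.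
  by apply: contraNneq ns => H; rewrite sz -act_lin H act0.
by apply: pull gU _; rewrite act_lin -sz.
Qed.

Lemma sa_sub : (sa <= gspecial)%MS. Proof. exact: col_le_l. Qed.
Lemma sb_sub : (sb <= gspecial)%MS. Proof. exact: (@col_le_r 1 1 sa sb). Qed.
Lemma sab_sub : ((sa + sb)%R <= gspecial)%MS. Proof. exact: (addmx_sub sa_sub sb_sub). Qed.
Lemma sa_neq0 : sa != 0.
Proof. by apply: contraNneq sa_nk => ->; rewrite linear0 mulmx0. Qed.
Lemma sb_neq0 : sb != 0.
Proof. by apply: contraNneq sb_nk => ->; rewrite linear0 mulmx0. Qed.
Lemma sab_neq0 : sa + sb != 0.
Proof.
apply: contraNneq sb_nk => /eqP; rewrite addrC addr_eq0 => /eqP ->.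
by rewrite linearN mulmxN sa_k oppr0.
Qed.

Lemma unit_row0 g y : g \in unitmx -> y != 0 -> y *m g^T != 0.
Proof.
move=> gU; apply: contraNneq => H.
have gT : g^T \in unitmx by rewrite unitmx_tr.
by rewrite -(mulmxK gT y) H mul0mx.
Qed.


Lemma wedge2_form k (h : 'M[F]_(k,6)) (B : 'M[F]_k) : 2%:R != 0 :> F -> B^T = -B ->
  (mxvec (h^T *m B *m h) <= gwedge2 h)%MS.
Proof.
move=> two sk.
have Bs : forall i j, B j i = - B i j.
  by move=> i j; have := congr1 (fun M : 'M[F]_k => M i j) sk; rewrite !mxE.
have R1 : forall a b i j, (B i j *: gwedge (row i h) (row j h)) a b
      = B i j * (h i a * h j b) - B i j * (h j a * h i b).
  move=> a b i j; rewrite /gwedge !mxE !big_ord1 !mxE.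
  by rewrite mulrBr.
have E2 : 2%:R *: (h^T *m B *m h) = \sum_i \sum_j B i j *: gwedge (row i h) (row j h).
  apply/matrixP => a b.
  have RE : (\sum_i \sum_j B i j *: gwedge (row i h) (row j h)) a b =
     \sum_i \sum_j (B i j * (h i a * h j b) - B i j * (h j a * h i b)).
    rewrite summxE; apply: eq_bigr => i _; rewrite summxE; apply: eq_bigr => j _; exact: R1.
  rewrite RE; clear RE.
  under eq_bigr do rewrite sumrB. rewrite sumrB.
  have S2 : \sum_(i < k) \sum_(j < k) B i j * (h j a * h i b)
          = - \sum_(i < k) \sum_(j < k) B i j * (h i a * h j b).
    rewrite exchange_big /= -sumrN; apply: eq_bigr => j _; rewrite -sumrN.
    by apply: eq_bigr => i _; rewrite Bs mulNr.
  rewrite S2 opprK.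
  have S1 : \sum_(i < k) \sum_(j < k) B i j * (h i a * h j b) = \sum_j (\sum_i (h^T a i * B i j)) * h j b.
    rewrite exchange_big /=; apply: eq_bigr => j _; rewrite big_distrl /=.
    by apply: eq_bigr => i _; rewrite !mxE mulrCA mulrA.
  rewrite S1 !mxE mulr2n mulrDl mul1r; congr (_ + _); apply: eq_bigr => j _; by rewrite !mxE.
have E : h^T *m B *m h = 2%:R^-1 *: \sum_i \sum_j B i j *: gwedge (row i h) (row j h).
  by rewrite -E2 scalerA mulVf // scale1r.
rewrite E linearZ /=; apply: scalemx_sub; rewrite linear_sum; apply: summx_sub => i _.
rewrite linear_sum; apply: summx_sub => j _; rewrite linearZ; apply: scalemx_sub.
rewrite /gwedge2; apply: (sumsmx_sup i) => //; apply: (sumsmx_sup j) => //.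
by rewrite genmxE.
Qed.

Lemma blk n m (P : 'M[F]_(1 + n, m)) (B : 'M[F]_(1 + n)) :
  ulsubmx B = 0 -> ursubmx B = 0 -> dlsubmx B = 0 ->
  P^T *m B *m P = (dsubmx P)^T *m drsubmx B *m dsubmx P.
Proof.
move=> ul ur dl.
rewrite -[B in LHS]submxK ul ur dl -[in LHS](vsubmxK P) tr_col_mx mul_row_block.
by rewrite !mulmx0 !addr0 mul_row_col !mul0mx !add0r.
Qed.

Lemma stepA (U : 'M[F]_(3, 6 * 6)) (c : 'rV[F]_6) : 2%:R != 0 :> F -> c != 0 ->
  (forall v : 'rV[F]_(6 * 6), (v <= U)%MS -> (vec_mx v)^T = - vec_mx v) ->
  (forall v : 'rV[F]_(6 * 6), (v <= U)%MS -> c *m vec_mx v = 0) ->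
  exists h : 'M[F]_(5, 6), \rank h = 5%N /\ (U <= gwedge2 h)%MS.
Proof.
move=> two nc sk kc.
pose L := col_ebase (c^T); have LU : L \in unitmx := col_ebase_unit _.
pose P := invmx L; have PU : P \in unitmx by rewrite unitmx_inv.
pose d := P *m c^T.
have dE : d = pid_mx (\rank c^T) *m row_ebase c^T.
  by rewrite /d -{1}(mulmx_ebase c^T) -!mulmxA mulKmx.
have dz : forall i : 'I_6, i != ord0 -> d i 0 = 0.
  move=> i ni; rewrite dE mxE big_ord1 mxE.
  have -> : (i == 0 :> nat) = false.
    by apply/negbTE; apply: contra ni => /eqP H; apply/eqP; apply: val_inj.
  by rewrite mul0r.
have d0 : d ord0 0 != 0.
  apply: contraNneq nc => H; apply/eqP.
  have dd : d = 0.
    apply/matrixP => i j; rewrite (ord1 j) [RHS]mxE.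
    by case: (eqVneq i ord0) => [->|/dz].
  have : c^T = L *m d by rewrite /d mulKVmx.
  by rewrite dd mulmx0 => /(congr1 trmx); rewrite trmxK trmx0.
pose h := dsubmx (P : 'M_(1 + 5, 6)).
exists h; split.
  have rP : \rank P = 6%N by rewrite mxrank_unit.
  have := mxrank_adds_leqif (usubmx (P : 'M_(1 + 5, 6))) h.
  rewrite addsmxE vsubmxK rP => -[le _].
  have := rank_leq_row (usubmx (P : 'M_(1 + 5, 6))).
  have := rank_leq_row h.
  move: le; rewrite /h; move: (\rank (usubmx _)) (\rank (dsubmx _)) => x y.
  move=> H1 H2 H3; apply/eqP; rewrite eqn_leq H2 /=.
  by rewrite -(leq_add2l 1) (leq_trans H1) // leq_add2r.
apply/row_subP => i.
have vU : (row i U <= U)%MS := row_sub i U.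
rewrite -(vec_mxK (row i U)).
move: (sk _ vU) (kc _ vU); move: (vec_mx (row i U)) => A skA kA.
pose B := L^T *m A *m L.
have AE : A = P^T *m B *m P.
  rewrite /B !mulmxA -trmx_mul mulmxV // trmx1 mul1mx -mulmxA mulmxV // mulmx1 //.
have skB : B^T = - B.
  by rewrite /B !trmx_mul trmxK skA mulNmx mulmxN mulmxA.
have Ac : A *m c^T = 0.
  by rewrite -[X in X *m _]trmxK -trmx_mul skA mulmxN kA oppr0 trmx0.
have Bd : B *m d = 0.
  by rewrite /B /d -!mulmxA (mulmxA L P) mulmxV // mul1mx Ac !mulmx0.
clearbody B.
have Bc0 : forall a, B a ord0 = 0.
  move=> a; have H := congr1 (fun M : 'M[F]_(6, 1) => M a 0) Bd.
  rewrite /= !mxE big_ord_recl /= big1 ?addr0 in H.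
    by move/eqP: H; rewrite mulf_eq0 (negbTE d0) orbF => /eqP.
  by move=> j _; rewrite dz ?mulr0 // eq_sym neq_lift.
have B0c : forall b, B ord0 b = 0.
  move=> b; have := congr1 (fun M : 'M[F]_6 => M b ord0) skB.
  by rewrite !mxE Bc0 oppr0.
pose B' := drsubmx (B : 'M_(1 + 5, 1 + 5)).
have l0 : forall j : 'I_1, lshift 5 j = ord0 :> 'I_6.
  by move=> j; apply: val_inj; rewrite /= (ord1 j).
have AE2 : A = h^T *m B' *m h.
  rewrite AE; apply: (@blk 5 6 P B).
    by apply/matrixP => a b; rewrite !mxE !l0; apply: Bc0.
    by apply/matrixP => a b; rewrite !mxE !l0; apply: B0c.
  by apply/matrixP => a b; rewrite !mxE !l0; apply: Bc0.
have skB' : B'^T = - B'.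
  apply/matrixP => a b; rewrite !mxE.
  by have := congr1 (fun M : 'M[F]_6 => M (rshift 1 a) (rshift 1 b)) skB; rewrite !mxE.
by rewrite AE2; apply: wedge2_form.
Qed.
Lemma ord3 (i : 'I_3) : i = inord 0 \/ i = inord 1 \/ i = inord 2.
Proof.
by case: i => [[|[|[|k]]] Hi] //=; [left|right;left|right;right]; apply: val_inj; rewrite /= inordK.
Qed.

Lemma ord6 (i : 'I_6) : i = inord 0 \/ i = inord 1 \/ i = inord 2 \/ i = inord 3 \/ i = inord 4 \/ i = inord 5.
Proof.
case: i => [[|[|[|[|[|[|k]]]]]] Hi] //=;
  [left|right;left|right;right;left|right;right;right;left|right;right;right;right;left|right;right;right;right;right];
  by apply: val_inj; rewrite /= inordK.
Qed.

Theorem gen (two : 2%:R != 0 :> F) (U : 'M[F]_(3, 6 * 6)) :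
  \rank U = 3%N ->
  (forall v : 'rV[F]_(6 * 6), (v <= U)%MS -> (vec_mx v)^T = - vec_mx v) ->
  (forall v : 'rV[F]_(6 * 6), (v <= U)%MS -> v != 0 -> \rank (vec_mx v) = 4%N) ->
  (forall W : 'M[F]_(2, 6 * 6), \rank W = 2%N -> (W <= U)%MS -> gspecial_line_of W) ->
  exists h : 'M[F]_(5, 6), \rank h = 5%N /\ (U <= gwedge2 h)%MS.
Proof.
move=> rU sk rk4 spec.
pose u k := row (inord k : 'I_3) U.
have uU : forall k, (u k <= U)%MS := fun k => row_sub _ _.
have U3 : forall M : 'M[F]_(2, 6*6), ~~ (U <= M)%MS.
  move=> M; apply/negP => /mxrankS; rewrite rU => H.
  by have := leq_trans H (rank_leq_row M).
have Ule : forall M : 'M[F]_(2, 6*6), (u 0 <= M)%MS -> (u 1 <= M)%MS -> (u 2 <= M)%MS -> (U <= M)%MS.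
  move=> M h0 h1 h2; apply/row_subP => i.
  by case: (ord3 i) => [->|[->|->]].
have u0n : u 0 != 0.
  apply/negP => /eqP H; apply: (negP (U3 (col_mx (u 1) (u 2)))); apply: Ule.
  - by rewrite H sub0mx.
  - exact: (@col_le_l 1 1).
  - exact: (@col_le_r 1 1).
have u10 : ~~ (u 1 <= u 0)%MS.
  apply/negP => H; apply: (negP (U3 (col_mx (u 0) (u 2)))); apply: Ule.
  - exact: (@col_le_l 1 1).
  - exact: submx_trans H (@col_le_l 1 1 _ _).
  - exact: (@col_le_r 1 1).
pose W12 : 'M[F]_(2, 6*6) := col_mx (u 0) (u 1).
have rW12 : \rank W12 = 2%N := rank2 u0n u10.
have W12U : (W12 <= U)%MS.
  by move: (@col_mx_sub F 1 1 _ (u 0) (u 1) _ U); rewrite !uU.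
have [_ [_ [g [gU Hg]]]] := spec W12 rW12 W12U.
pose c := ge (inord 5) *m g^T.
have cn : c != 0 := unit_row0 gU (ge_neq0 _).
have cW : forall w, (w <= W12)%MS -> c *m vec_mx w = 0 := S1 gU Hg.
case: (eqVneq (c *m vec_mx (u 2)) 0) => Hc3.
  apply: (stepA two cn sk) => v vU; apply: kill_sub vU => i.
  case: (ord3 i) => [->|[->|->]] //.
  - exact: cW (@col_le_l 1 1 _ _).
  - exact: cW (@col_le_r 1 1 _ _).
exfalso.
pose T := (c + kermx (vec_mx (u 2)))%MS.
have u2n : u 2 != 0.
  apply/negP => /eqP H; apply: (negP (U3 W12)); apply: Ule.
  - exact: (@col_le_l 1 1).
  - exact: (@col_le_r 1 1).
  - by rewrite H sub0mx.
have rk2 : \rank (kermx (vec_mx (u 2))) = 2%N by rewrite mxrank_ker rk4 ?uU.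
have K : forall w, (w <= W12)%MS -> w != 0 -> forall y, y *m vec_mx w = 0 -> (y <= T)%MS.
  move=> w wW wn y yw.
  have u2w : ~~ (u 2 <= w)%MS.
    apply/negP => H; apply: (negP (U3 W12)); apply: Ule.
    - exact: (@col_le_l 1 1).
    - exact: (@col_le_r 1 1).
    - exact: submx_trans H wW.
  pose W' : 'M[F]_(2, 6*6) := col_mx w (u 2).
  have rW' : \rank W' = 2%N := rank2 wn u2w.
  have wU : (w <= U)%MS := submx_trans wW W12U.
  have W'U : (W' <= U)%MS.
    by move: (@col_mx_sub F 1 1 _ w (u 2) _ U); rewrite wU uU.
  have [_ [_ [g' [g'U Hg']]]] := spec W' rW' W'U.
  pose c' := ge (inord 5) *m g'^T.
  have c'n : c' != 0 := unit_row0 g'U (ge_neq0 _).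
  have c'w : c' *m vec_mx w = 0 := S1 g'U Hg' (@col_le_l 1 1 _ _).
  have c'u : c' *m vec_mx (u 2) = 0 := S1 g'U Hg' (@col_le_r 1 1 _ _).
  have cw : c *m vec_mx w = 0 := cW w wW.
  have cc' : ~~ (c <= c')%MS.
    apply/negP => H; move/eqP: Hc3; apply.
    have : (c <= kermx (vec_mx (u 2)))%MS.
      by apply: submx_trans H _; apply/sub_kermxP.
    by move/sub_kermxP.
  have rC : \rank (col_mx c' c) = 2%N := rank2 c'n cc'.
  have Cker : (col_mx c' c <= kermx (vec_mx w))%MS.
    by rewrite col_mx_sub; apply/andP; split; apply/sub_kermxP.
  have rK : \rank (kermx (vec_mx w)) = 2%N by rewrite mxrank_ker rk4.
  have KC : (kermx (vec_mx w) <= col_mx c' c)%MS.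
    by have [_ <-] := mxrank_leqif_sup Cker; rewrite rC rK.
  have CT : (col_mx c' c <= T)%MS.
    rewrite col_mx_sub; apply/andP; split.
      by apply: submx_trans (addsmxSr _ _); apply/sub_kermxP.
    exact: addsmxSl.
  apply: submx_trans CT; apply: submx_trans KC; exact/sub_kermxP.
have cT : (c <= T)%MS := addsmxSl _ _.
have := pre gU Hg sa_sub sa_neq0 sa_k; move=> [w1 [w1W w1n k1]].
have := pre gU Hg sb_sub sb_neq0 sb_k; move=> [w2 [w2W w2n k2]].
have := pre gU Hg sab_sub sab_neq0 sab_k; move=> [w3 [w3W w3n k3]].
have e4T := K _ w1W w1n _ k1.
have e3T := K _ w2W w2n _ k2.
have e23T := K _ w3W w3n _ k3.
rewrite !mulmxBl in e23T.
have e2T : (ge (inord 2) *m g^T <= T)%MS.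
  have -> : ge (inord 2) *m g^T = ge (inord 2) *m g^T - ge (inord 3) *m g^T - ge (inord 4) *m g^T
     + ge (inord 4) *m g^T + ge (inord 3) *m g^T by rewrite !subrK.
  by apply: addmx_sub => //; apply: addmx_sub.
pose Y0 := ge (inord 0) *m g^T.
pose Y1 := ge (inord 1) *m g^T.
pose T2 := (T + Y0 + Y1)%MS.
have TT2 : (T <= T2)%MS := submx_trans (addsmxSl T Y0) (addsmxSl _ Y1).
have gT2 : (g^T <= T2)%MS.
  apply/row_subP => i; rewrite rowE; change (ge i *m g^T <= T2)%MS.
  case: (ord6 i) => [->|[->|[->|[->|[->|->]]]]].
  - exact: submx_trans (addsmxSr T Y0) (addsmxSl _ _).
  - exact: addsmxSr.
  - exact: submx_trans e2T TT2.
  - exact: submx_trans e3T TT2.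
  - exact: submx_trans e4T TT2.
  - exact: submx_trans cT TT2.
have r6 : \rank g^T = 6%N by rewrite mxrank_unit // unitmx_tr.
have H6 := mxrankS gT2; rewrite r6 in H6.
have b1 := (mxrank_adds_leqif (T + Y0)%MS Y1).1.
have b2 := (mxrank_adds_leqif T Y0).1.
have b3 := (mxrank_adds_leqif c (kermx (vec_mx (u 2)))).1.
have r1 := rank_leq_row Y0.
have r2 := rank_leq_row Y1.
have r3 := rank_leq_row c.
rewrite rk2 in b3.
have H7 : (\rank T2 <= \rank T + \rank Y0 + \rank Y1)%N.
  exact: leq_trans b1 (leq_add b2 (leqnn _)).
have H8 : (\rank T <= 3)%N by exact: leq_trans b3 (leq_add r3 (leqnn _)).
have := leq_trans H6 (leq_trans H7 (leq_add (leq_add H8 r1) r2)).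
by [].
Qed.
End G.

Lemma two_CC : 2%:R != 0 :> CC.
Proof. by rewrite pnatr_eq0. Qed.

Theorem mainTheorem6 (U : 'M[CC]_(3, 6 * 6)) :
  \rank U = 3%N ->
  (forall v : 'rV[CC]_(6 * 6), (v <= U)%MS -> skew_sym6 (vec_mx v)) ->
  (forall v : 'rV[CC]_(6 * 6), (v <= U)%MS -> v != 0 -> \rank (vec_mx v) = 4%N) ->
  (forall W : 'M[CC]_(2, 6 * 6), \rank W = 2%N -> (W <= U)%MS -> special_line_of W) ->
  exists h : 'M[CC]_(5, 6), \rank h = 5%N /\ (U <= wedge2 h)%MS.
Proof.
exact: (@gen _ two_CC U).
Qed.
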